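(* Let $\mathbb{F}$ be an algebraically closed field with $\mathrm{Char}(\mathbb{F})\ne2$, and let $s,t,z\in\mathbb{F}$ be nonzero with $s^2\neq1$, $t^2\ne1$, $s+t\neq0$, $z\neq1$. Put $\tilde y_1=tz+\frac{1-t^2}{s+t}$ and $\tilde y_2=-sz+\frac{1+st}{s+t}$. Then the pair $A=\begin{pmatrix}0&z&0\\1&0&1-z\\0&1&0\end{pmatrix}$, $A^*=\begin{pmatrix}0&\tilde y_1&0\\ s&0&\tilde y_2\\0&t&0\end{pmatrix}$ is a Leonard pair in $\mathrm{Mat}_3(\mathbb{F})$, and it has a parameter array with $\theta_0=1,\theta_1=0,\theta_2=-1$, $\theta^*_0=1,\theta^*_1=0,\theta^*_2=-1$, $\varphi_1=\varphi_2=\frac{(s-1)(t-1)}{s+t}$, $\phi_1=\phi_2=\frac{(s+1)(t+1)}{s+t}$.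
   Context: A Leonard pair in $\mathrm{Mat}_{d+1}(\mathbb{F})$ is a pair of matrices $A,A^*$ such that there is a basis of $\mathbb{F}^{d+1}$ in which $A$ is irreducible tridiagonal (tridiagonal with all sub/superdiagonal entries nonzero) and $A^*$ diagonal, and a basis in which $A^*$ is irreducible tridiagonal and $A$ diagonal. A Leonard system is $(A,\{E_i\}_{i=0}^d,A^*,\{E^*_i\}_{i=0}^d)$ where $A,A^*$ each have $d+1$ distinct eigenvalues, $\{E_i\},\{E^*_i\}$ are orderings of their primitive idempotents, and $E_iA^*E_j,E^*_iAE^*_j$ are $0$ for $|i-j|>1$ and nonzero for $|i-j|=1$. Eigenvalue sequences: $AE_i=\theta_iE_i$, $A^*E^*_i=\theta^*_iE^*_i$. First split sequence: for nonzero $v\in E^*_0V$, $u_i=(A-\theta_{i-1}I)\cdots(A-\theta_0I)v$ form a basis in which $A^*$ is upper bidiagonal with diagonal $\theta^*_0,\dots,\theta^*_d$ and superdiagonal $\varphi_1,\dots,\varphi_d$. Second split sequence $\{\phi_i\}$: first split sequence of $(A,\{E_{d-i}\},A^*,\{E^*_i\})$. Parameter array $(\{\theta_i\},\{\theta^*_i\},\{\varphi_i\},\{\phi_i\})$; a parameter array of a Leonard pair is that of any associated Leonard system. *)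

(* Defs.v *)
From HB Require Import structures.
From mathcomp Require Import all_boot all_order all_algebra.
Set Implicit Arguments. Unset Strict Implicit. Unset Printing Implicit Defensive.
Import Order.TTheory GRing.Theory Num.Theory.
Local Open Scope ring_scope.

(* Matrices act on column vectors; a "basis" is given by the columns of an
   invertible matrix P, and the matrix of A in that basis is P^-1 A P. *)

Section Leonard.
Variable F : fieldType.
Variable d : nat.
Local Notation M := 'M[F]_d.+1.

Definition irr_tridiag (B : M) : Prop :=
  forall i j : 'I_d.+1,
    ((i.+1 < j)%N \/ (j.+1 < i)%N -> B i j = 0) /\
    ((i.+1 = j)%N \/ (j.+1 = i)%N -> B i j != 0).

Definition diagonal (B : M) : Prop :=
  forall i j : 'I_d.+1, i != j -> B i j = 0.

Definition leonard_pair (A As : M) : Prop :=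
  (exists P : M, P \in unitmx /\
     irr_tridiag (invmx P *m A *m P) /\ diagonal (invmx P *m As *m P)) /\
  (exists Q : M, Q \in unitmx /\
     irr_tridiag (invmx Q *m As *m Q) /\ diagonal (invmx Q *m A *m Q)).

Definition prim_idems (A : M) (E : nat -> M) (th : nat -> F) : Prop :=
  (forall i j, (i <= d)%N -> (j <= d)%N ->
      E i *m E j = if i == j then E i else 0) /\
  \sum_(i < d.+1) E i = 1%:M /\
  (forall i, (i <= d)%N -> E i != 0 /\ A *m E i = th i *: E i) /\
  (forall i j, (i <= d)%N -> (j <= d)%N -> th i = th j -> i = j).

Definition leonard_system (A : M) (E : nat -> M) (As : M) (Es : nat -> M)
    (th ths : nat -> F) : Prop :=
  prim_idems A E th /\ prim_idems As Es ths /\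
  (forall i j, (i <= d)%N -> (j <= d)%N ->
     ((i.+1 < j)%N \/ (j.+1 < i)%N -> E i *m As *m E j = 0) /\
     ((i.+1 = j)%N \/ (j.+1 = i)%N -> E i *m As *m E j != 0)) /\
  (forall i j, (i <= d)%N -> (j <= d)%N ->
     ((i.+1 < j)%N \/ (j.+1 < i)%N -> Es i *m A *m Es j = 0) /\
     ((i.+1 = j)%N \/ (j.+1 = i)%N -> Es i *m A *m Es j != 0)).

Fixpoint split_vec (A : M) (th : nat -> F) (v : 'cV[F]_d.+1) (i : nat)
  : 'cV[F]_d.+1 :=
  match i with
  | 0 => v
  | i'.+1 => (A - (th i')%:M) *m split_vec A th v i'
  end.

(* phi_1..phi_d is the first split sequence of the Leonard system with
   eigenvalue sequences th, ths and E*_0 = Es0: for every nonzero v in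
   E*_0 V the u_i form a basis in which A* is upper bidiagonal with
   diagonal ths_0..ths_d and superdiagonal phi_1..phi_d. *)
Definition first_split (A As Es0 : M) (th ths phi : nat -> F) : Prop :=
  forall v : 'cV[F]_d.+1, v != 0 -> (exists w, v = Es0 *m w) ->
    let u := split_vec A th v in
    (\matrix_(j < d.+1, i < d.+1) u i j ord0) \in unitmx /\
    (forall i, (i <= d)%N ->
       As *m u i = ths i *: u i +
                   (if i is i'.+1 then phi i *: u i' else 0)).

(* The second split
   sequence is the first split sequence of (A, {E_{d-i}}, A*, {E*_i}),
   whose eigenvalue sequence is th_{d-i}. *)
Definition parameter_array (A As : M) (th ths phi phi' : nat -> F) : Prop :=
  exists (E Es : nat -> M),
    leonard_system A E As Es th ths /\
    first_split A As (Es 0%N) th ths phi /\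
    first_split A As (Es 0%N) (fun i => th (d - i)%N) ths phi'.

End Leonard.

Definition mx3 (F : fieldType) (rows : seq (seq F)) : 'M[F]_3 :=
  \matrix_(i < 3, j < 3) nth 0 (nth [::] rows i) j.

Definition seq3 (F : fieldType) (a b c : F) : nat -> F :=
  fun i => nth 0 [:: a; b; c] i.

(* Main.v *)
Require Import Defs.
From HB Require Import structures.
From mathcomp Require Import all_boot all_order all_algebra.
From mathcomp Require Import ring.
Import Order.TTheory GRing.Theory Num.Theory.
Local Open Scope ring_scope.


Section Gen.
Variable F : fieldType.
Variable n : nat.

Lemma sum_deltar (f : 'I_n -> F) j : \sum_k f k * (k == j)%:R = f j.
Proof.
rewrite (bigD1 j) //= eqxx mulr1 big1 ?addr0 // => k /negbTE ->; by rewrite mulr0.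
Qed.

Lemma mul_delta_entry m p (M : 'M[F]_(m, n)) (N : 'M[F]_(n, p)) i j a b :
  (M *m delta_mx i j *m N) a b = M a i * N j b.
Proof.
rewrite mxE.
have E1 k : (M *m delta_mx i j) a k = M a i * (k == j)%:R.
  rewrite mxE (bigD1 i) //= big1 ?addr0 => [|l /negbTE nl]; rewrite mxE ?nl ?mulr0 //.
  by rewrite eqxx.
under eq_bigr do rewrite E1 -mulrA (mulrC _ (N _ b)) mulrA.
by rewrite sum_deltar.
Qed.

Lemma delta_conj (M : 'M[F]_n) i j :
  delta_mx i i *m M *m delta_mx j j = M i j *: delta_mx i j.
Proof.
apply/matrixP => a b.
have -> : delta_mx i i *m M *m delta_mx j j =
  1%:M *m delta_mx i i *m (M *m delta_mx j j *m 1%:M) by rewrite mul1mx mulmx1 mulmxA.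
rewrite !mul_delta_entry !mxE.
rewrite (eq_sym j b). case: (a == i); case: (b == j); rewrite /= ?eqxx ?mulr0 ?mul0r ?mulr1 ?mul1r //.
Qed.
End Gen.


Section Sys.
Variable F : fieldType.
Local Notation M3 := 'M[F]_3.
Definition th3 : nat -> F := seq3 1 0 (-1).
Definition D3 : M3 := diag_mx (\row_(i < 3) th3 i).
Definition Ec (P Pi : M3) (i : nat) : M3 := P *m delta_mx (inord i) (inord i) *m Pi.

Lemma Ec_mul P Pi i j : Pi *m P = 1%:M -> (i <= 2)%N -> (j <= 2)%N ->
  Ec P Pi i *m Ec P Pi j = if i == j then Ec P Pi i else 0.
Proof.
move=> hPi hi hj; rewrite /Ec !mulmxA -(mulmxA _ Pi P) hPi mulmx1 -(mulmxA P).
rewrite mul_delta_mx_cond.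
have [->|nij] := eqVneq i j; first by rewrite eqxx mulr1n.
suff /negbTE -> : (inord i : 'I_3) != inord j by rewrite mulr0n mulmx0 mul0mx.
apply: contra nij => /eqP /(congr1 val) /=; rewrite !inordK //= => ->. by [].
Qed.

Lemma Ec_conj (P Pi Y : M3) i j : Pi *m P = 1%:M ->
  Ec P Pi i *m Y *m Ec P Pi j =
  (Pi *m Y *m P) (inord i) (inord j) *: (P *m delta_mx (inord i) (inord j) *m Pi).
Proof.
move=> hPi; rewrite /Ec.
have -> : P *m delta_mx (inord i) (inord i) *m Pi *m Y *m
   (P *m delta_mx (inord j) (inord j) *m Pi) =
   P *m (delta_mx (inord i) (inord i) *m (Pi *m Y *m P) *m delta_mx (inord j) (inord j)) *m Pi.
  by rewrite !mulmxA.
rewrite delta_conj. rewrite -scalemxAr. by rewrite -scalemxAl.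
Qed.

Lemma conj_nz (P Pi : M3) (i j : 'I_3) : Pi *m P = 1%:M -> P *m (delta_mx i j : M3) *m Pi != 0.
Proof.
move=> hPi; apply/eqP => H.
have : Pi *m (P *m delta_mx i j *m Pi) *m P = delta_mx i j.
  by rewrite !mulmxA hPi mul1mx -mulmxA hPi mulmx1.
rewrite H mulmx0 mul0mx => /matrixP /(_ i j); rewrite !mxE !eqxx /=.
by move/eqP; rewrite eq_sym oner_eq0.
Qed.

Lemma D3_delta (i : 'I_3) : D3 *m delta_mx i i = th3 i *: delta_mx i i.
Proof.
apply/matrixP => a b; rewrite -[D3 *m _]mulmx1 mul_delta_entry !mxE.
rewrite (eq_sym i b); have [->|nai] := eqVneq a i; case: (b == i);
  by rewrite /= ?mulr1n ?mulr0n ?mulr0 ?mul0r ?mulr1.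
Qed.

Lemma sys (P Pi X Y : M3) : Pi *m P = 1%:M -> P *m Pi = 1%:M ->
  Pi *m X *m P = D3 -> irr_tridiag (Pi *m Y *m P) -> (1:F) != -1 ->
  prim_idems X (Ec P Pi) th3 /\
  (forall i j, (i <= 2)%N -> (j <= 2)%N ->
     ((i.+1 < j)%N \/ (j.+1 < i)%N -> Ec P Pi i *m Y *m Ec P Pi j = 0) /\
     ((i.+1 = j)%N \/ (j.+1 = i)%N -> Ec P Pi i *m Y *m Ec P Pi j != 0)).
Proof.
move=> hPi hPPi hD hB h1.
split; last first.
  move=> i j hi hj; rewrite Ec_conj //.
  have [h0 h1'] := hB (inord i) (inord j); rewrite !inordK // in h0 h1'.
  split=> H; first by rewrite h0 // scale0r.
  by rewrite scaler_eq0 negb_or h1' //= conj_nz.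
split; first by move=> i j hi hj; exact: Ec_mul.
split.
  rewrite /Ec; under eq_bigr do rewrite inord_val.
  by rewrite -mulmx_suml -mulmx_sumr -mx1_sum_delta mulmx1 hPPi.
split.
  move=> i hi; split; first exact: conj_nz.
  rewrite /Ec.
  have -> : X *m (P *m delta_mx (inord i) (inord i) *m Pi) =
     P *m ((Pi *m X *m P) *m delta_mx (inord i) (inord i)) *m Pi.
    by rewrite !mulmxA hPPi mul1mx.
  rewrite hD D3_delta inordK // -scalemxAr. by rewrite -scalemxAl.
move=> i j hi hj; rewrite /th3 /seq3.
case: i hi => [|[|[|i]]] //; case: j hj => [|[|[|j]]] // _ _ /= /eqP;
  rewrite ?eqxx ?oner_eq0 // ?(eq_sym 0) ?oppr_eq0 ?oner_eq0 //.
- by rewrite (negbTE h1).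
- by rewrite eq_sym (negbTE h1).
Qed.
End Sys.
Arguments th3 {F}.
Arguments D3 {F}.
Arguments Ec {F}.


Section FS.
Variable F : fieldType.
Local Notation M3 := 'M[F]_3.

Lemma split_scale (A : M3) th (k : F) x i :
  split_vec A th (k *: x) i = k *: split_vec A th x i.
Proof. by elim: i => [|i IH] //=; rewrite IH scalemxAr. Qed.

Lemma first_split_of (A As P Pi : M3) (u : nat -> 'cV[F]_3) th ths phi :
  (forall i, (i <= 2)%N -> split_vec A th (col 0 P) i = u i) ->
  (\matrix_(j < 3, i < 3) u i j ord0) \in unitmx ->
  (forall i, (i <= 2)%N -> As *m u i =
      ths i *: u i + (if i is i'.+1 then phi i *: u i' else 0)) ->
  first_split A As (Ec P Pi 0) th ths phi.
Proof.
move=> hu hUu hrel v hv [w hw].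
set k := (Pi *m w) 0 0.
have hv' : v = k *: col 0 P.
  rewrite hw /Ec; apply/matrixP => a b.
  have i0 : inord 0 = 0 :> 'I_3 by apply: val_inj; rewrite /= inordK.
  rewrite -mulmxA mul_delta_entry !mxE (ord1 b) mulrC i0 /k mxE.
  by [].
have hk : k != 0.
  by apply: contra hv => /eqP hk0; rewrite hv' hk0 scale0r.
rewrite /=; split.
  have -> : (\matrix_(j < 3, i < 3) split_vec A th v i j ord0) =
            k *: (\matrix_(j < 3, i < 3) u i j ord0).
    apply/matrixP => a b; rewrite !mxE hv' split_scale hu; last by rewrite -ltnS.
    by rewrite mxE.
  by rewrite unitmxZ // unitfE.
move=> i hi; rewrite hv' !split_scale -scalemxAr hu // hrel //.
case: i hi => [|i] hi; rewrite scalerDr !scalerA mulrC //.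
- by rewrite scaler0.
- by rewrite split_scale scalerA (mulrC k) hu // ltnW.
Qed.
End FS.


Ltac mxcomp := apply/matrixP; case=> [[|[|[|?]]] ?] //; case=> [[|[|[|?]]] ?] //;
  rewrite !(mxE, big_ord_recr, big_ord0) /=.

Lemma det3_unit (F : fieldType) (a b c d e f g h k : F) :
  a*(e*k - f*h) - b*(d*k - f*g) + c*(d*h - e*g) != 0 ->
  mx3 [:: [::a;b;c];[::d;e;f];[::g;h;k]] \in unitmx.
Proof.
move=> hD.
set D := a*(e*k - f*h) - b*(d*k - f*g) + c*(d*h - e*g).
have := @mulmx1_unit _ _ (mx3 [:: [::a;b;c];[::d;e;f];[::g;h;k]])
  (mx3 [:: [:: (e*k-f*h)/D; -(b*k-c*h)/D; (b*f-c*e)/D];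
           [:: -(d*k-f*g)/D; (a*k-c*g)/D; -(a*f-c*d)/D];
           [:: (d*h-e*g)/D; -(a*h-b*g)/D; (a*e-b*d)/D]]).
case; last by [].
rewrite /D; mxcomp; field; exact: hD.
Qed.


Ltac mxcol := apply/matrixP; case=> [[|[|[|?]]] ?] //; case=> [[|?] ?] //;
  rewrite !(mxE, big_ord_recr, big_ord0) /=.

Section Conc.
Variable F : fieldType.
Variables s t z : F.
Hypothesis h2 : (2:F) != 0.
Hypothesis hw : s + t != 0.
Hypothesis hs2 : s ^+ 2 != 1.
Hypothesis ht2 : t ^+ 2 != 1.

Definition y1 := t * z + (1 - t ^+ 2) / (s + t).
Definition y2 := - s * z + (1 + s * t) / (s + t).
Definition Am := mx3 [:: [:: 0; z; 0]; [:: 1; 0; 1 - z]; [:: 0; 1; 0]].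
Definition Asm := mx3 [:: [:: 0; y1; 0]; [:: s; 0; y2]; [:: 0; t; 0]].
Definition Pm := mx3 [:: [:: y1; y2; y1]; [:: 1; 0; -1]; [:: t; -s; t]].
Definition Pim := mx3 [:: [:: s/2; 1/2; y2/2]; [:: t; 0; -y1]; [:: s/2; -1/2; y2/2]].
Definition Qm := mx3 [:: [:: z; z-1; z]; [:: 1; 0; -1]; [:: 1; 1; 1]].
Definition Qim := mx3 [:: [:: 1/2; 1/2; (1-z)/2]; [:: -1; 0; z]; [:: 1/2; -1/2; (1-z)/2]].
Definition Bm := mx3 [:: [:: (1+s*t)/(s+t); (1-s^+2)/(2*(s+t)); 0];
   [:: (t^+2-1)/(s+t); 0; (1-t^+2)/(s+t)];
   [:: 0; -(1-s^+2)/(2*(s+t)); -(1+s*t)/(s+t)]].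

Lemma PPi : Pm *m Pim = 1%:M.
Proof. rewrite /Pm /Pim /y1 /y2. mxcomp; field; by rewrite ?h2 ?hw. Qed.
Lemma QQi : Qm *m Qim = 1%:M.
Proof. rewrite /Qm /Qim. mxcomp; field; by rewrite ?h2 ?hw. Qed.
Lemma PiAP : Pim *m Am *m Pm = Bm.
Proof. rewrite /Pm /Pim /Bm /Am /y1 /y2. mxcomp; field; by rewrite ?h2 ?hw. Qed.
Lemma QiAsQ : Qim *m Asm *m Qm = Bm.
Proof. rewrite /Qm /Qim /Bm /Asm /y1 /y2. mxcomp; field; by rewrite ?h2 ?hw. Qed.
Lemma PiAsP : Pim *m Asm *m Pm = D3.
Proof. rewrite /Pm /Pim /D3 /th3 /seq3 /Asm /y1 /y2. mxcomp; field; by rewrite ?h2 ?hw. Qed.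
Lemma QiAQ : Qim *m Am *m Qm = D3.
Proof. rewrite /Qm /Qim /D3 /th3 /seq3 /Am. mxcomp; field; by rewrite ?h2 ?hw. Qed.
End Conc.


Arguments y1 {F}. Arguments y2 {F}. Arguments Am {F}. Arguments Asm {F}.
Arguments Pm {F}. Arguments Pim {F}. Arguments Qm {F}. Arguments Qim {F}. Arguments Bm {F}.
Section Conc2.
Variable F : fieldType.
Variables s t z : F.
Hypothesis h2 : (2:F) != 0.
Hypothesis hw : s + t != 0.
Hypothesis hs2 : s ^+ 2 != 1.
Hypothesis ht2 : t ^+ 2 != 1.

Lemma irrB : irr_tridiag (Bm s t).
Proof.
have ns : 1 - s ^+ 2 != 0 by rewrite subr_eq0 eq_sym.
have nt : 1 - t ^+ 2 != 0 by rewrite subr_eq0 eq_sym.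
have nt' : t ^+ 2 - 1 != 0 by rewrite subr_eq0.
have i2w : (2 * (s + t))^-1 != 0 by rewrite invr_eq0 mulf_neq0.
have iw : (s + t)^-1 != 0 by rewrite invr_eq0.
move=> [[|[|[|?]]] ?] [[|[|[|?]]] ?] //; split => //= H; rewrite mxE /=;
  try by case: H.
all: by rewrite ?mulNr ?oppr_eq0 mulf_neq0.
Qed.
End Conc2.



Section Conc3.
Variable F : fieldType.
Variables s t z : F.
Hypothesis h2 : (2:F) != 0.
Hypothesis hw : s + t != 0.
Hypothesis hs2 : s ^+ 2 != 1.
Hypothesis ht2 : t ^+ 2 != 1.
Hypothesis ns1 : 1 - s != 0.
Hypothesis ns2 : 1 + s != 0.
Hypothesis nt1 : 1 - t != 0.
Hypothesis nt2 : 1 + t != 0.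

Definition mm := y1 s t z + (1 - z) * t.
Definition cv3 (a b c : F) : 'cV[F]_3 := \matrix_(i < 3, j < 1) nth 0 [:: a; b; c] i.
Definition c0 := cv3 (y1 s t z) 1 t.
Definition c1 := cv3 (z - y1 s t z) (mm - 1) (1 - t).
Definition c2 := cv3 (z * (mm - 1)) ((z - y1 s t z) + (1 - z) * (1 - t)) (mm - 1).
Definition uu := fun i => nth 0 [:: c0; c1; c2] i.

Lemma fs1 : first_split (Am z) (Asm s t z) (Ec (Pm s t z) (Pim s t z) 0) th3 th3
    (fun _ => (s - 1) * (t - 1) / (s + t)).
Proof.
apply: (@first_split_of _ _ _ _ _ uu).
- have e0 : col 0 (Pm s t z) = c0 by rewrite /Pm /c0 /cv3; mxcol.
  have e1 : (Am z - (th3 0)%:M) *m c0 = c1.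
    rewrite /Am /c0 /c1 /cv3 /th3 /seq3 /mm; (mxcol; ring).
  have e2 : (Am z - (th3 1)%:M) *m c1 = c2.
    rewrite /Am /c2 /c1 /cv3 /th3 /seq3 /mm; (mxcol; ring).
  by case=> [|[|[|?]]] // _; rewrite [split_vec _ _ _ _]/= ?e0 ?e1 ?e2.
- have -> : (\matrix_(j < 3, i < 3) uu i j ord0) =
    mx3 [:: [:: y1 s t z; z - y1 s t z; z * (mm - 1)];
  [:: 1; mm - 1; (z - y1 s t z) + (1 - z) * (1 - t)];
  [:: t; 1 - t; mm - 1]] by rewrite /uu /c0 /c1 /c2 /cv3; mxcomp.
  apply: det3_unit.
  have -> : y1 s t z * ((mm - 1) * (mm - 1) - (z - y1 s t z + (1 - z) * (1 - t)) * (1 - t)) -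
    (z - y1 s t z) * (1 * (mm - 1) - (z - y1 s t z + (1 - z) * (1 - t)) * t) +
    z * (mm - 1) * (1 * (1 - t) - (mm - 1) * t) =
    (1 - t) * ((1 - s) * (1 - t) / (s + t)) * ((1 + t) ^+ 2 * (1 + s) / (s + t) ^+ 2).
    rewrite /mm /y1; field; by rewrite ?hw.
  by rewrite !mulf_neq0 ?invr_eq0 ?expf_neq0.
- case=> [|[|[|?]]] // _; rewrite /= /uu /Asm /c0 /c1 /c2 /mm /cv3 /th3 /seq3.
  + (mxcol; rewrite /y1 /y2; field; by rewrite ?hw).
  + (mxcol; rewrite /y1 /y2; field; by rewrite ?hw).
  + time mxcol. all: (rewrite /y1 /y2; field; by rewrite ?hw).
Qed.
Definition c0' := cv3 (y1 s t z) 1 t.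
Definition c1' := cv3 (z + y1 s t z) (mm + 1) (1 + t).
Definition c2' := cv3 (z * (mm + 1)) ((z + y1 s t z) + (1 - z) * (1 + t)) (mm + 1).
Definition uu' := fun i => nth 0 [:: c0'; c1'; c2'] i.

Lemma fs2 : first_split (Am z) (Asm s t z) (Ec (Pm s t z) (Pim s t z) 0) (fun i => seq3 1 0 (-1) (2 - i)) th3
    (fun _ => (s + 1) * (t + 1) / (s + t)).
Proof.
apply: (@first_split_of _ _ _ _ _ uu').
- have e0 : col 0 (Pm s t z) = c0' by rewrite /Pm /c0' /cv3; mxcol.
  have e1 : (Am z - (seq3 1 0 (-1) (2 - 0))%:M) *m c0' = c1'.
    rewrite /Am /c0' /c1' /cv3 /th3 /seq3 /mm; (mxcol; ring).
  have e2 : (Am z - (seq3 1 0 (-1) (2 - 1))%:M) *m c1' = c2'.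
    rewrite /Am /c2' /c1' /cv3 /th3 /seq3 /mm; (mxcol; ring).
  by case=> [|[|[|?]]] // _; rewrite [split_vec _ _ _ _]/= ?e0 ?e1 ?e2.
- have -> : (\matrix_(j < 3, i < 3) uu' i j ord0) =
    mx3 [:: [:: y1 s t z; z + y1 s t z; z * (mm + 1)];
  [:: 1; mm + 1; (z + y1 s t z) + (1 - z) * (1 + t)];
  [:: t; 1 + t; mm + 1]] by rewrite /uu' /c0' /c1' /c2' /cv3; mxcomp.
  apply: det3_unit.
  have -> : y1 s t z * ((mm + 1) * (mm + 1) - (z + y1 s t z + (1 - z) * (1 + t)) * (1 + t)) -
    (z + y1 s t z) * (1 * (mm + 1) - (z + y1 s t z + (1 - z) * (1 + t)) * t) +
    z * (mm + 1) * (1 * (1 + t) - (mm + 1) * t) =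
    (1 + t) * ((1 + s) * (1 + t) / (s + t)) * ((1 - t) ^+ 2 * (1 - s) / (s + t) ^+ 2).
    rewrite /mm /y1; field; by rewrite ?hw.
  by rewrite !mulf_neq0 ?invr_eq0 ?expf_neq0.
- case=> [|[|[|?]]] // _; rewrite /= /uu' /Asm /c0' /c1' /c2' /mm /cv3 /th3 /seq3.
  + (mxcol; rewrite /y1 /y2; field; by rewrite ?hw).
  + (mxcol; rewrite /y1 /y2; field; by rewrite ?hw).
  + time mxcol. all: (rewrite /y1 /y2; field; by rewrite ?hw).
Qed.
End Conc3.


Arguments PPi {F}. Arguments QQi {F}. Arguments PiAP {F}. Arguments QiAsQ {F}.
Arguments PiAsP {F}. Arguments QiAQ {F}. Arguments irrB {F}. Arguments sys {F}.
Arguments fs1 {F}. Arguments fs2 {F}.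

Theorem proposition4p5 (F : closedFieldType) (s t z : F) :
  (2 \notin [pchar F])%N ->
  s != 0 -> t != 0 -> z != 0 ->
  s ^+ 2 != 1 -> t ^+ 2 != 1 -> s + t != 0 -> z != 1 ->
  let y1 := t * z + (1 - t ^+ 2) / (s + t) in
  let y2 := - s * z + (1 + s * t) / (s + t) in
  let A := mx3 [:: [:: 0; z; 0]; [:: 1; 0; 1 - z]; [:: 0; 1; 0]] in
  let As := mx3 [:: [:: 0; y1; 0]; [:: s; 0; y2]; [:: 0; t; 0]] in
  leonard_pair A As /\
  parameter_array A As (seq3 1 0 (-1)) (seq3 1 0 (-1))
    (fun _ => (s - 1) * (t - 1) / (s + t))
    (fun _ => (s + 1) * (t + 1) / (s + t)).
Proof.
move=> hc hs ht hz hs2 ht2 hw hz1 y1' y2' A As.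
suff: leonard_pair (Am z) (Asm s t z) /\
  parameter_array (Am z) (Asm s t z) (seq3 1 0 (-1)) (seq3 1 0 (-1))
    (fun _ => (s - 1) * (t - 1) / (s + t))
    (fun _ => (s + 1) * (t + 1) / (s + t)) by [].
have h2 : (2:F) != 0.
  apply: contraNneq hc => h; rewrite inE /= h eqxx.
  by [].
have h1 : (1:F) != -1.
  apply: contra h2 => /eqP h; have -> : (2:F) = 1 + 1 by ring.
  by rewrite {2}h subrr.
have hs' : (1 - s) * (1 + s) != 0.
  have -> : (1 - s) * (1 + s) = 1 - s ^+ 2 by ring.
  by rewrite subr_eq0 eq_sym.
have ht' : (1 - t) * (1 + t) != 0.
  have -> : (1 - t) * (1 + t) = 1 - t ^+ 2 by ring.
  by rewrite subr_eq0 eq_sym.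
move: hs'; rewrite mulf_eq0 negb_or => /andP [ns1 ns2].
move: ht'; rewrite mulf_eq0 negb_or => /andP [nt1 nt2].
have hPPi := PPi s t z h2 hw.
have hQQi := QQi z h2.
have hPiP := mulmx1C hPPi.
have hQiQ := mulmx1C hQQi.
have [Pu _] := mulmx1_unit hPPi.
have [Qu _] := mulmx1_unit hQQi.
have iP : invmx (Pm s t z) = Pim s t z.
  by rewrite -[invmx _]mulmx1 -hPPi mulmxA mulVmx // mul1mx.
have iQ : invmx (Qm z) = Qim z.
  by rewrite -[invmx _]mulmx1 -hQQi mulmxA mulVmx // mul1mx.
have hB := irrB s t h2 hw hs2 ht2.
have diag3 : diagonal (D3 : 'M[F]_3).
  by move=> i j nij; rewrite /D3 !mxE (negbTE nij) mulr0n.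
split.
  split.
    exists (Pm s t z); split => //; rewrite iP PiAP // PiAsP //.
  exists (Qm z); split => //; rewrite iQ QiAsQ // QiAQ //.
exists (Ec (Qm z) (Qim z)), (Ec (Pm s t z) (Pim s t z)).
have [pA cA] := sys _ _ _ _ hQiQ hQQi (QiAQ z h2) (eq_ind_r _ hB (QiAsQ s t z h2 hw)) h1.
have [pAs cAs] := sys _ _ _ _ hPiP hPPi (PiAsP s t z h2 hw) (eq_ind_r _ hB (PiAP s t z h2 hw)) h1.
split; first by split; [exact: pA | split; [exact: pAs | split; [exact: cA | exact: cAs]]].
split; [exact: fs1 | exact: fs2].
Qed.
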